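(* For $(c,d)\in\mathbb{C}\times\mathbb{C}^*$ let $f_{c,d}(z) = 1 + \frac cz + \frac d{z^2}$ and identify $(c,d)$ with $[c:d:1]\in\mathbb{CP}^2$. For $n\ge 1$ let $\mathcal{X}_n$ be the set of $(c,d)\in\mathbb{C}\times\mathbb{C}^*$ such that $0$ is periodic under $f_{c,d}$ with period dividing $n$, and $\overline{\mathcal{X}_n}$ its closure in $\mathbb{CP}^2$. Let $n\ge 3$. If $[c:0:1]\in\overline{\mathcal{X}_n}$, then $c^{-1} = -4\cos^2(\pi p/q)$ for some integers $1\le p<q\le n$ with $\gcd(p,q)=1$ and $q\ne 2$. *)

(* Defs.v *)
From HB Require Import structures.
From mathcomp Require Import all_boot all_order all_algebra.
From mathcomp Require Import complex.
From mathcomp Require Import all_classical all_reals all_analysis.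
Set Implicit Arguments. Unset Strict Implicit. Unset Printing Implicit Defensive.
Import Order.TTheory GRing.Theory Num.Theory.
Import numFieldNormedType.Exports.
Local Open Scope ring_scope.
Local Open Scope complex_scope.

(* The Riemann sphere C ∪ {∞}: [Some z] is z, [None] is ∞. *)
Definition sphere (R : rcfType) := option R[i].

Definition fcd (R : rcfType) (c d : R[i]) (z : sphere R) : sphere R :=
  match z with
  | None => Some 1
  | Some w => if w == 0 then None else Some (1 + c / w + d / (w ^+ 2))
  end.

Definition Xn (R : rcfType) (n : nat) : set ((R[i])^o * (R[i])^o) :=
  [set p | p.2 != 0 /\ iter n (fcd p.1 p.2) (Some 0) = Some 0].

(* Main.v *)
Require Import Defs.
From HB Require Import structures.
From mathcomp Require Import all_boot all_order all_algebra.
From mathcomp Require Import complex.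
From mathcomp Require Import all_classical all_reals all_analysis.
From mathcomp Require Import ring lra.
Import Order.TTheory GRing.Theory Num.Theory.
Import numFieldNormedType.Exports.
Local Open Scope ring_scope.
Local Open Scope complex_scope.




Fixpoint hh {R : rcfType} (p : R[i] * R[i]) (j : nat) : R[i] :=
  match j with
  | 0 => 1
  | j'.+1 => 1 + p.1 / hh p j' + p.2 / (hh p j') ^+ 2
  end.

Lemma iter_hh (R : rcfType) (c d : R[i]) j :
  (forall i, (i < j)%N -> hh (c,d) i != 0) ->
  iter j.+2 (fcd c d) (Some 0) = Some (hh (c,d) j).
Proof.
elim: j => [|j IH] H; first by rewrite /= eqxx.
rewrite iterS IH; last by move=> i Hi; apply: H; apply: ltn_trans Hi _.
by rewrite /= (negbTE (H j (ltnSn j))).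
Qed.

Section Topo.
Local Open Scope classical_set_scope.

Lemma hh_cvg (R : realType) (c : (R[i])^o) j :
  (forall i, (i < j)%N -> hh (c,0) i != 0) ->
  (hh p j : (R[i])^o) @[p --> ((c,0) : (R[i])^o * (R[i])^o)] --> (hh (c,0) j : (R[i])^o).
Proof.
elim: j => [|j IH] H; first exact: cvg_cst.
have Hj : hh (c, 0) j != 0 by apply: H.
have IH' := IH (fun i Hi => H i (ltn_trans Hi (ltnSn j))).
apply: cvgD; first apply: cvgD.
- exact: cvg_cst.
- apply: cvgM; first exact: cvg_fst.
  exact: cvgV.
- apply: cvgM; first exact: cvg_snd.
  apply: cvgV; first by rewrite expf_neq0.
  exact: cvgM.
Qed.

Lemma near_hh (R : realType) (c : (R[i])^o) k :
  (forall i, (i <= k)%N -> hh (c,0) i != 0) ->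
  \forall p \near ((c,0) : (R[i])^o * (R[i])^o),
   forall i, (i <= k)%N -> hh p i != 0.
Proof.
elim: k => [|k IH] Hk.
  near=> p => i; rewrite leqn0 => /eqP -> /=; exact: oner_neq0.
have IH' := IH (fun i Hi => Hk i (leq_trans Hi (leqnSn k))).
have cv := @hh_cvg R c k.+1 (fun i Hi => Hk i (ltnW Hi)).
have h2 := @cvgr_neq0 _ _ _ _ _ _ _ cv (Hk _ (leqnn _)).
near=> p => i.
rewrite leq_eqVlt => /orP [/eqP -> |]; first by near: p; exact: h2.
rewrite ltnS; move: i; near: p; exact: IH'.
Unshelve. all: by end_near.
Qed.

Lemma not_closure (R : realType) n (c : R[i]) : (3 <= n)%N ->
  (forall i, (i <= n - 2)%N -> hh (c,0) i != 0) -> ~ closure (@Xn R n) (c,0).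
Proof.
move=> n3 H cl.
have := @near_hh R c _ H.
move=> /cl [[a b] [[/= b0 Hab] Hp]].
have E : n = (n - 2).+2 by rewrite -addn2 subnK // (leq_trans _ n3).
move: Hab; rewrite E iter_hh; last by move=> i Hi; apply: Hp; exact: ltnW.
by case=> /eqP; rewrite (negbTE (Hp _ (leqnn _))).
Qed.


End Topo.

Fixpoint aa {R : rcfType} (c : R[i]) (j : nat) : R[i] :=
  match j with
  | 0 => 0
  | j'.+1 => match j' with 0 => 1 | j''.+1 => aa c j' + c * aa c j'' end
  end.

Lemma aaSS (R : rcfType) (c : R[i]) j : aa c j.+2 = aa c j.+1 + c * aa c j.
Proof. by []. Qed.

Lemma aa_c0 (R : rcfType) j : aa (0 : R[i]) j.+1 = 1.
Proof. elim: j => [//|j IH]; by rewrite aaSS IH mul0r addr0. Qed.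

Lemma pow_rec (R : rcfType) (x c : R[i]) j : x * x = x + c ->
  x ^+ j.+2 = x ^+ j.+1 + c * x ^+ j.
Proof. move=> h; rewrite !exprSr -mulrA h; ring. Qed.

Lemma aa_binet (R : rcfType) (c s : R[i]) : s ^+ 2 = 1 + 4%:R * c ->
  forall j, s * aa c j = ((1 + s) / 2%:R) ^+ j - ((1 - s) / 2%:R) ^+ j.
Proof.
move=> hs.
have h2 : (2%:R : R[i]) != 0 by rewrite pnatr_eq0.
have hl : (1 + s) / 2%:R * ((1 + s) / 2%:R) = (1 + s) / 2%:R + c.
  have -> : c = (s^+2 - 1) / 4%:R by rewrite hs; field.
  by field.
have hm : (1 - s) / 2%:R * ((1 - s) / 2%:R) = (1 - s) / 2%:R + c.
  have -> : c = (s^+2 - 1) / 4%:R by rewrite hs; field.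
  by field.
suff H : forall j, s * aa c j = ((1 + s) / 2%:R) ^+ j - ((1 - s) / 2%:R) ^+ j /\
  s * aa c j.+1 = ((1 + s) / 2%:R) ^+ j.+1 - ((1 - s) / 2%:R) ^+ j.+1.
  by move=> j; case: (H j).
elim=> [|j [IH1 IH2]].
  split; first by rewrite /= mulr0 !expr0 subrr.
  by rewrite /= mulr1 !expr1; field.
split; first exact: IH2.
rewrite aaSS mulrDr IH2 mulrCA IH1 (@pow_rec _ _ _ j hl) (@pow_rec _ _ _ j hm); ring.
Qed.

Lemma aa_half (R : rcfType) j :
  aa (- (4%:R)^-1 : R[i]) j.+1 = j.+1%:R / 2%:R ^+ j.
Proof.
have h2 : (2%:R : R[i]) != 0 by rewrite pnatr_eq0.
suff H : forall j, aa (- (4%:R)^-1 : R[i]) j.+1 = j.+1%:R / 2%:R ^+ j /\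
   aa (- (4%:R)^-1 : R[i]) j.+2 = j.+2%:R / 2%:R ^+ j.+1.
  by case: (H j).
elim=> [|k [IH1 IH2]].
  by split; rewrite /= ?expr0 ?expr1 ?mulr0 ?addr0 ?divr1 //; field.
split=> //.
rewrite aaSS IH2 IH1 !exprS -[k.+3]addn3 -[k.+2]addn2 -[k.+1]addn1 !natrD.
field; exact: expf_neq0.
Qed.

Lemma aa_zero (R : rcfType) (c : R[i]) m : (0 < m)%N -> aa c m = 0 ->
  c != 0 /\ exists z : R[i], [/\ z ^+ m = 1, z != 1 & - c^-1 = z + 2%:R + z^-1].
Proof.
case: m => // m _ ha.
have c0 : c != 0 by apply/eqP => c0; move: ha; rewrite c0 aa_c0 => /eqP; rewrite oner_eq0.
split=> //.
set s := sqrtc (1 + 4%:R * c).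
have hs : s ^+ 2 = 1 + 4%:R * c by rewrite sqr_sqrtc.
have h2 : (2%:R : R[i]) != 0 by rewrite pnatr_eq0.
have h4 : (4%:R : R[i]) != 0 by rewrite pnatr_eq0.
have hc : c = (s^+2 - 1) / 4%:R by rewrite hs; field.
have [s0|s0] := eqVneq s 0.
  have hc' : c = - (4%:R)^-1 by rewrite hc s0; field.
  by move: ha; rewrite hc' aa_half => /eqP; rewrite mulf_eq0 invr_eq0 expf_eq0 !pnatr_eq0 andbF.
have B := @aa_binet _ _ _ hs m.+1.
rewrite ha mulr0 in B; move/esym/eqP: B; rewrite subr_eq0 => B.
set l := (1 + s) / 2%:R in B; set u := (1 - s) / 2%:R in B.
have hlu : l * u = - c by rewrite /l /u hc; field.
have hdiff : l - u = s by rewrite /l /u; field.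
have hsum : l + u = 1 by rewrite /l /u; field.
clearbody l u.
have l0 : l != 0 by apply/eqP=> l0; move: hlu; rewrite l0 mul0r => /eqP; rewrite eq_sym oppr_eq0 (negbTE c0).
have u0 : u != 0 by apply/eqP=> u0; move: hlu; rewrite u0 mulr0 => /eqP; rewrite eq_sym oppr_eq0 (negbTE c0).
exists (l / u); split.
- by rewrite exprMn exprVn (eqP B) mulfV // expf_neq0.
- apply/eqP => H.
  have hlu' : l = u by rewrite -[l](divfK u0) H mul1r.
  by move: hdiff; rewrite hlu' subrr => /esym/eqP; rewrite (negbTE s0).
- have hc2 : c = - (l * u) by rewrite hlu opprK.
  have hu : u = 1 - l by rewrite -hsum; ring.
  rewrite hc2 invrN opprK invf_div.
  move: u0; rewrite hu => u0.
  field; by apply/andP.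
Qed.

Lemma mulc_def (R : rcfType) (a b c d : R) :
  (a +i* b) * (c +i* d) = (a * c - b * d) +i* (a * d + b * c) :> R[i].
Proof. by []. Qed.

Lemma demoivre (R : realType) (f : R) m :
  (cos f +i* sin f) ^+ m = cos (f *+ m) +i* sin (f *+ m).
Proof.
elim: m => [|m IH]; first by rewrite expr0 !mulr0n cos0 sin0.
by rewrite exprS IH mulrS cosD sinD mulc_def (addrC (sin f * _)).
Qed.

Lemma cos_eq1 (R : realType) (t : R) : 0 <= t -> cos t = 1 ->
  exists j : nat, t = (pi *+ 2) *+ j.
Proof.
move=> t0 ct.
set T := pi *+ 2.
have T0 : 0 < T by rewrite /T mulrn_wgt0 // pi_gt0.
have tT0 : 0 <= t / T by rewrite divr_ge0 // ltW.
have /andP [h1 h2] := truncn_itv tT0.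
set j := Num.trunc (t / T) in h1 h2.
exists j.
set r := t - T *+ j.
have r0 : 0 <= r.
  by rewrite /r subr_ge0 -mulr_natr mulrC -ler_pdivlMr.
have rT : r < T.
  by rewrite /r ltrBlDr -mulrS -mulr_natr mulrC -ltr_pdivrMr.
have cr : cos r = 1.
  rewrite -ct; have -> : t = r + T *+ j by rewrite /r subrK.
  by rewrite (periodicn (@cosD2pi R)).
suff : r = 0 by move/eqP; rewrite subr_eq0 => /eqP.
have pi0 := pi_gt0 R.
have mem0 : (0:R) \in `[0, pi] by rewrite in_itv /= lexx ltW.
have [rp|rp] := lerP r pi.
  apply: (@cos_inj R) => //; first by rewrite in_itv /= r0 rp.
  by rewrite cos0.
exfalso.
have memT : T - r \in `[0, pi] by rewrite in_itv /=; rewrite /T in rT *; apply/andP; split; lra.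
have : T - r = 0.
  apply: (@cos_inj R) => //.
  by rewrite cos0 addrC cosD2pi cosN.
rewrite /T in rT *; lra.
Qed.

Lemma unity_cos (R : realType) (z : R[i]) m : (0 < m)%N -> z ^+ m = 1 -> z != 1 ->
  exists j : nat, [/\ (0 < j)%N, (j.*2 <= m)%N &
     z + 2%:R + z^-1 = (4%:R * cos (pi * j%:R / m%:R) ^+ 2)%:C].
Proof.
move=> m0 zm z1.
have nz : `|z| = 1.
  apply/eqP; rewrite -(pexpr_eq1 m0) ?normr_ge0 //.
  by rewrite -normrX zm normr1.
have zi : z^-1 = z^*%C by rewrite invc_norm nz expr1n invr1 mul1r.
move: z zm z1 nz zi => [x y] zm z1 nz zi.
have hxy : x ^+ 2 + y ^+ 2 = 1.
  move: nz; rewrite normc_def /= => -[] /(congr1 (fun t => t ^+ 2)).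
  by rewrite sqr_sqrtr ?addr_ge0 ?sqr_ge0 // expr1n.
have hx : x \in `[-1, 1] by rewrite in_itv /=; apply/andP; split; nra.
set th := acos x.
have cth : cos th = x by rewrite /th acosK.
have sth : sin th = `|y|.
  rewrite /th sin_acos; last by move: hx; rewrite in_itv.
  by rewrite -sqrtr_sqr -hxy; congr Num.sqrt; ring.
have th0 : 0 <= th by rewrite /th acos_ge0 //; move: hx; rewrite in_itv.
have thpi : th <= pi by rewrite /th acos_lepi //; move: hx; rewrite in_itv.
clearbody th.
have [f [cf sf ef]] : exists f, [/\ cos f = x, sin f = y & cos (f *+ m) = cos (th *+ m)].
  have [y0|y0] := lerP 0 y.
    by exists th; rewrite cth sth ger0_norm.
  exists (- th); rewrite cosN sinN cth sth ltr0_norm ?opprK //.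
  by rewrite mulNrn cosN.
have : cos (th *+ m) = 1.
  move: zm; rewrite -cf -sf demoivre => -[] <- _; by rewrite ef.
move/(@cos_eq1 R _ (mulrn_wge0 m th0)) => [j hj].
have m0' : (m%:R : R) != 0 by rewrite pnatr_eq0 -lt0n.
have thE : th = (pi * j%:R / m%:R) *+ 2.
  have h : th * m%:R = pi *+ 2 *+ j by rewrite mulr_natr; exact: hj.
  rewrite -[th](mulfK m0') h.
  have -> : (pi : R) *+ 2 *+ j = pi * (2 * j)%N%:R by rewrite mulr_natr mulrnA.
  rewrite -[RHS]mulr_natr natrM; ring.
exists j; split.
- rewrite lt0n; apply/negP => /eqP j0.
  move: hj; rewrite j0 mulr0n => /eqP; rewrite mulrn_eq0 (negbTE (lt0n_neq0 m0)) /= => /eqP th00.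
  move: cth; rewrite th00 cos0 => x1.
  have y0 : y = 0 by move: hxy; rewrite -x1 expr1n => h; apply/eqP; rewrite -sqrf_eq0; apply/eqP; lra.
  by move: z1; rewrite -x1 y0 eqxx.
- have pi0 := pi_gt0 R.
  have : ((pi : R) *+ 2) *+ j <= pi *+ m by rewrite -hj lerMn2r thpi orbT.
  rewrite -mulrnA -[pi *+ (2 * j)%N]mulr_natr -[pi *+ m]mulr_natr ler_pM2l // ler_nat => h.
  by rewrite -muln2 mulnC.
- rewrite zi /conjc addrAC addcJ /=.
  rewrite -cth thE cos_mulr2n.
  rewrite -(rmorph_nat (real_complex R)) -rmorphM -rmorphD.
  congr (_ %:C); ring.
Qed.

Lemma hhS (R : rcfType) (c d : R[i]) j :
  hh (c,d) j.+1 = 1 + c / hh (c,d) j + d / hh (c,d) j ^+ 2.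
Proof. by []. Qed.

Lemma hh_aa (R : rcfType) (c : R[i]) j :
  (forall i, (i < j)%N -> hh (c,0) i != 0) ->
  aa c j.+1 != 0 /\ hh (c,0) j = aa c j.+2 / aa c j.+1.
Proof.
elim: j => [|j IH] H.
  split; first exact: oner_neq0.
  by rewrite aaSS /= mulr0 addr0 divr1.
have [a0 e] := IH (fun i Hi => H i (ltn_trans Hi (ltnSn j))).
have hj := H j (ltnSn j).
rewrite e in hj.
have a2 : aa c j.+2 != 0.
  by move: hj; apply: contra => /eqP ->; rewrite mul0r.
split=> //.
rewrite hhS e (@aaSS _ c j.+1); field.
by apply/andP.
Qed.

Theorem lemma2p3 (R : realType) (n : nat) (c : R[i]) :
  (3 <= n)%N ->
  closure (@Xn R n) (c, 0) ->
  exists p q : nat,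
    [/\ (1 <= p < q)%N, (q <= n)%N, coprime p q, q != 2%N &
        c^-1 = - 4%:R * ((cos (pi * p%:R / q%:R : R)) ^+ 2)%:C].
Proof.
move=> n3 cl.
have HE : exists k, (k <= n - 2)%N && (hh (c,0) k == 0).
  case: (pselect (exists k, (k <= n - 2)%N && (hh (c,0) k == 0))) => // H.
  exfalso; apply: (@not_closure R n c n3 _ cl) => i Hi; apply/negP => /eqP h.
  by apply: H; exists i; rewrite Hi h eqxx.
case: (ex_minnP HE) => k /andP [kn /eqP hk0] kmin.
have hlt : forall i, (i < k)%N -> hh (c,0) i != 0.
  move=> i Hi; apply/negP => /eqP h.
  have := kmin i; rewrite h eqxx andbT (leq_trans (ltnW Hi) kn) => /(_ isT).
  by rewrite leqNgt Hi.
have [a0 e] := @hh_aa _ c k hlt.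
have ha : aa c k.+2 = 0.
  by move: hk0; rewrite e => /eqP; rewrite mulf_eq0 invr_eq0 (negbTE a0) orbF => /eqP.
have k0 : k != 0%N.
  by apply/eqP => k0; move: hk0; rewrite k0 => /eqP; rewrite oner_eq0.
have mn : (k.+2 <= n)%N.
  have hn : (n - 2).+2 = n by rewrite -addn2 subnK // ltnW.
  by rewrite -[X in (_ <= X)%N]hn !ltnS.
have [c0 [z [zm z1 zc]]] := @aa_zero R c k.+2 isT ha.
have [j [j0 jm E]] := @unity_cos R z k.+2 isT zm z1.
set m := k.+2 in mn jm E.
have m0 : (0 < m)%N by [].
set g := gcdn j m.
have g0 : (0 < g)%N by rewrite gcdn_gt0 m0 orbT.
have hj : j = (j %/ g * g)%N by rewrite divnK // dvdn_gcdl.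
have hm : m = (m %/ g * g)%N by rewrite divnK // dvdn_gcdr.
exists (j %/ g)%N, (m %/ g)%N.
have jltm : (j < m)%N.
  by apply: (leq_trans _ jm); rewrite -addnn -addn1 leq_add2l.
have Hpq : (j %/ g < m %/ g)%N.
  by rewrite -(ltn_pmul2r g0) -hj -hm.
have p0 : (0 < j %/ g)%N.
  by rewrite lt0n; apply/eqP => h; move: j0; rewrite hj h mul0n.
have ang : (pi * (j %/ g)%:R / (m %/ g)%:R : R) = pi * j%:R / m%:R.
  have g0' : (g%:R : R) != 0 by rewrite pnatr_eq0 -lt0n.
  have q0' : ((m %/ g)%:R : R) != 0 by rewrite pnatr_eq0 -lt0n (leq_ltn_trans _ Hpq).
  rewrite [in RHS]hj [in RHS]hm !natrM; field.
  by apply/andP.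
have ceq : c^-1 = - 4%:R * ((cos (pi * j%:R / m%:R : R)) ^+ 2)%:C.
  apply: oppr_inj; rewrite zc E rmorphM rmorph_nat /=; ring.
split.
- by rewrite p0 Hpq.
- exact: leq_trans (leq_div _ _) mn.
- rewrite /coprime.
  have : (gcdn (j %/ g) (m %/ g) * g = 1 * g)%N by rewrite muln_gcdl -hj -hm mul1n.
  by move/eqP; rewrite eqn_pmul2r.
- apply/eqP => q2.
  have p1 : (j %/ g = 1)%N.
    by apply/eqP; rewrite eqn_leq p0 andbT -ltnS -q2.
  move: ceq; rewrite -ang p1 q2 mulr1 cos_pihalf expr0n /= mulr0 => /eqP.
  by rewrite invr_eq0 (negbTE c0).
- by rewrite ang.
Qed.
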